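(* Let $V\colon[-1,1]\to[0,1]$ be a smooth function with $V(-1)=V(1)=1$ and $V(0)=0$, strictly decreasing on $[-1,0]$ and strictly increasing on $[0,1]$. Let $$T^*S^2=\{(x,y,z,u,v,w)\in\mathbb{R}^6 \mid x^2+y^2+z^2=1,\ xu+yv+zw=0\},$$ and define $F=(J,H)\colon T^*S^2\to\mathbb{R}^2$ by $$J=xv-yu,\qquad H=\tfrac12(u^2+v^2+w^2)+V(z).$$ Then the image of $F$ is the epigraph $$F(T^*S^2)=\Big\{(j,h)\in\mathbb{R}^2 \;\Big|\; j\in\mathbb{R},\ h\ge \tfrac{j^2}{2}\Big\},$$ and for every $j\in\mathbb{R}$ the fiber $F^{-1}\big(j,\tfrac{j^2}{2}\big)$ is a circle.
   Context: $T^*S^2$ is realized as a submanifold of $T^*\mathbb{R}^3\cong\mathbb{R}^6$ with position coordinates $(x,y,z)$ and momentum coordinates $(u,v,w)$; $J$ is the angular momentum about the $z$-axis and $H$ is the mechanical energy of the spherical pendulum with potential $V$. *)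

(* Defs.v *)
From Stdlib Require Import Reals Lra.
From Coquelicot Require Import Coquelicot.
Open Scope R_scope.

Record P6 := mkP6 { px : R; py : R; pz : R; pu : R; pv : R; pw : R }.

Definition TS2 (p : P6) : Prop :=
  px p ^ 2 + py p ^ 2 + pz p ^ 2 = 1 /\
  px p * pu p + py p * pv p + pz p * pw p = 0.

Definition Jmap (p : P6) : R := px p * pv p - py p * pu p.
Definition Hmap (V : R -> R) (p : P6) : R :=
  / 2 * (pu p ^ 2 + pv p ^ 2 + pw p ^ 2) + V (pz p).

(* Smoothness of V on [-1,1]: every iterated derivative exists at each point
   of [-1,1] (V : R -> R is a smooth extension near the endpoints). *)
Definition smooth_on_m11 (V : R -> R) : Prop :=
  forall (n : nat) (x : R), -1 <= x <= 1 -> ex_derive (Derive_n V n) x.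

Definition dist6 (p q : P6) : R :=
  sqrt ((px p - px q) ^ 2 + (py p - py q) ^ 2 + (pz p - pz q) ^ 2 +
        (pu p - pu q) ^ 2 + (pv p - pv q) ^ 2 + (pw p - pw q) ^ 2).
Definition dist2 (a b : R * R) : R :=
  sqrt ((fst a - fst b) ^ 2 + (snd a - snd b) ^ 2).

Definition unit_circle (a : R * R) : Prop := fst a ^ 2 + snd a ^ 2 = 1.

Definition cont_on {A B : Type} (dA : A -> A -> R) (dB : B -> B -> R)
  (S : A -> Prop) (f : A -> B) : Prop :=
  forall x, S x -> forall eps, 0 < eps ->
    exists delta, 0 < delta /\
      forall y, S y -> dA x y < delta -> dB (f x) (f y) < eps.

Definition is_circle (S : P6 -> Prop) : Prop :=
  exists (f : P6 -> R * R) (g : R * R -> P6),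
    (forall p, S p -> unit_circle (f p)) /\
    (forall q, unit_circle q -> S (g q)) /\
    (forall p, S p -> g (f p) = p) /\
    (forall q, unit_circle q -> f (g q) = q) /\
    cont_on dist6 dist2 S f /\
    cont_on dist2 dist6 unit_circle g.

(* Main.v *)
Require Import Defs.
From Stdlib Require Import Reals Lra Psatz.
From Coquelicot Require Import Coquelicot.
Open Scope R_scope.

Lemma sqrt_bound (A B k : R) : 0 <= B -> 0 < k -> A <= k^2 * B ->
  sqrt A <= k * sqrt B.
Proof.
  intros HB Hk HA.
  rewrite <- (sqrt_pow2 k) by lra.
  rewrite <- sqrt_mult by nra.
  apply sqrt_le_1_alt. lra.
Qed.

Lemma V_nonneg (V : R -> R)
  (Hrange : forall x, -1 <= x <= 1 -> 0 <= V x <= 1) (p : P6) :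
  TS2 p -> 0 <= V (pz p).
Proof.
  intros [Hs _]. apply Hrange. nra.
Qed.

Lemma fiber_char (V : R -> R)
  (Hrange : forall x, -1 <= x <= 1 -> 0 <= V x <= 1)
  (H0 : V 0 = 0)
  (Hdec : forall a b, -1 <= a -> a < b -> b <= 0 -> V b < V a)
  (Hinc : forall a b, 0 <= a -> a < b -> b <= 1 -> V a < V b) (j : R) (p : P6) :
  TS2 p -> Jmap p = j -> Hmap V p = j ^ 2 / 2 ->
  pz p = 0 /\ pw p = 0 /\ px p ^ 2 + py p ^ 2 = 1 /\ pu p = - j * py p /\ pv p = j * px p.
Proof.
  intros HT HJ HH.
  pose proof (V_nonneg V Hrange p HT) as HV.
  destruct HT as [Hs Ho].
  destruct p as [x y z u v w]; unfold Jmap, Hmap in *; simpl in *.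
  subst j.
  assert (Hlag : (x^2+y^2)*(u^2+v^2) = (x*u+y*v)^2 + (x*v-y*u)^2) by ring.
  assert (Hxy : x^2+y^2 <= 1) by nra.
  assert (Hw : w^2 + 2 * V z + ((u^2+v^2) - (x*v-y*u)^2) = 0) by lra.
  assert (Hle : (x*v-y*u)^2 <= u^2+v^2).
  { assert (0 <= (x*u+y*v)^2) by apply pow2_ge_0.
    assert (0 <= u^2+v^2) by (assert (0 <= u^2) by apply pow2_ge_0; assert (0 <= v^2) by apply pow2_ge_0; lra).
    assert ((x^2+y^2)*(u^2+v^2) <= 1*(u^2+v^2)) by (apply Rmult_le_compat_r; lra).
    lra. }
  assert (Hw2 : 0 <= w^2) by (apply pow2_ge_0).
  assert (Hw20 : w^2 = 0) by lra.
  assert (Hw0 : w = 0) by (simpl in Hw20; nra).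
  assert (HVz : V z = 0) by lra.
  assert (Hz : z = 0).
  { destruct (Rtotal_order z 0) as [Hl|[He|Hg]]; auto.
    - assert (V 0 < V z) by (apply Hdec; nra). lra.
    - assert (V 0 < V z) by (apply Hinc; nra). lra. }
  subst z w.
  assert (Hxy1 : x^2+y^2 = 1) by lra.
  assert (Hxu : x*u+y*v = 0) by lra.
  repeat split; auto.
  - transitivity ((x^2+y^2)*u); [rewrite Hxy1; ring|].
    replace ((x^2+y^2)*u) with (x*(x*u+y*v) - y*(x*v-y*u)) by ring.
    rewrite Hxu. ring.
  - transitivity ((x^2+y^2)*v); [rewrite Hxy1; ring|].
    replace ((x^2+y^2)*v) with (y*(x*u+y*v) + x*(x*v-y*u)) by ring.
    rewrite Hxu. ring.
Qed.

Theorem mainTheorem1 (V : R -> R)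
  (Hsmooth : smooth_on_m11 V)
  (Hrange : forall x, -1 <= x <= 1 -> 0 <= V x <= 1)
  (Hm1 : V (-1) = 1) (H1 : V 1 = 1) (H0 : V 0 = 0)
  (Hdec : forall a b, -1 <= a -> a < b -> b <= 0 -> V b < V a)
  (Hinc : forall a b, 0 <= a -> a < b -> b <= 1 -> V a < V b) :
  (forall j h : R,
     (exists p : P6, TS2 p /\ Jmap p = j /\ Hmap V p = h) <-> j ^ 2 / 2 <= h)
  /\
  (forall j : R,
     is_circle (fun p => TS2 p /\ Jmap p = j /\ Hmap V p = j ^ 2 / 2)).
Proof.
  split.
  - intros j h; split.
    + intros [p [HT [HJ HH]]].
      pose proof (V_nonneg V Hrange p HT) as HV.
      destruct HT as [Hs Ho].
      destruct p as [x y z u v w]; unfold Jmap, Hmap in *; simpl in *.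
      subst j h.
      assert (Hlag : (x^2+y^2)*(u^2+v^2) = (x*u+y*v)^2 + (x*v-y*u)^2) by ring.
      assert (Hxy : x^2+y^2 <= 1) by nra.
      assert (0 <= (x*u+y*v)^2) by apply pow2_ge_0.
      assert (0 <= u^2+v^2) by (assert (0 <= u^2) by apply pow2_ge_0; assert (0 <= v^2) by apply pow2_ge_0; lra).
      assert ((x^2+y^2)*(u^2+v^2) <= 1*(u^2+v^2)) by (apply Rmult_le_compat_r; lra).
      assert (0 <= w^2) by apply pow2_ge_0.
      lra.
    + intros Hh.
      set (w := sqrt (2 * (h - j^2/2))).
      assert (Hw : w^2 = 2 * (h - j^2/2)).
      { unfold w. rewrite pow2_sqrt; lra. }
      exists (mkP6 1 0 0 0 j w).
      unfold TS2, Jmap, Hmap; simpl. rewrite H0.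
      repeat split; try ring. lra.
  - intros j.
    exists (fun p => (px p, py p)).
    exists (fun q => mkP6 (fst q) (snd q) 0 (- j * snd q) (j * fst q) 0).
    split; [|split; [|split; [|split; [|split]]]].
    + intros p [HT [HJ HH]].
      destruct (fiber_char V Hrange H0 Hdec Hinc j p HT HJ HH) as [_ [_ [Hc _]]].
      unfold unit_circle; simpl; lra.
    + intros [a b] Hq; unfold unit_circle in Hq; unfold TS2, Jmap, Hmap; cbn [fst snd px py pz pu pv pw] in *.
      split; [split; ring_simplify; lra|split; [transitivity (j*(a^2+b^2)); [ring|rewrite Hq; ring]|]].
      rewrite H0. replace (j^2/2) with (/2 * (j^2 * (a^2+b^2))) by (rewrite Hq; field).
      ring.
    + intros p [HT [HJ HH]].
      destruct (fiber_char V Hrange H0 Hdec Hinc j p HT HJ HH) as [Hz [Hw [_ [Hu Hv]]]].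
      destruct p as [x y z u v w]; simpl in Hz, Hw, Hu, Hv |- *; subst z w u v; reflexivity.
    + intros [a b] Hq. reflexivity.
    + intros p _ eps Heps. exists eps; split; auto.
      intros q _ Hd. unfold dist2, dist6 in *; cbn [fst snd].
      eapply Rle_lt_trans; [|exact Hd].
      apply sqrt_le_1_alt.
      pose proof (pow2_ge_0 (pz p - pz q)). pose proof (pow2_ge_0 (pu p - pu q)).
      pose proof (pow2_ge_0 (pv p - pv q)). pose proof (pow2_ge_0 (pw p - pw q)).
      lra.
    + intros a _ eps Heps. exists (eps / (1 + j^2)); split.
      { apply Rdiv_lt_0_compat; nra. }
      intros b _ Hd. unfold dist2, dist6 in *; cbn [px py pz pu pv pw].
      pose proof (pow2_ge_0 j) as Hj.
      assert (Hk : 0 < 1 + j^2) by lra.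
      pose proof (pow2_ge_0 (fst a - fst b)). pose proof (pow2_ge_0 (snd a - snd b)).
      eapply Rle_lt_trans.
      { apply (sqrt_bound _ ((fst a - fst b) ^ 2 + (snd a - snd b) ^ 2) (1 + j^2)); [lra|exact Hk|].
        remember ((fst a - fst b) ^ 2 + (snd a - snd b) ^ 2) as D eqn:HD.
        assert (E1 : D + (0 - 0) ^ 2 +
          (- j * snd a - - j * snd b) ^ 2 + (j * fst a - j * fst b) ^ 2 + (0 - 0) ^ 2
          = (1 + j^2) * D) by (rewrite HD; ring).
        rewrite E1.
        assert (0 <= D) by (rewrite HD; lra).
        assert (0 <= j^2 * D) by (apply Rmult_le_pos; lra).
        assert (0 <= j^2 * (j^2 * D)) by (apply Rmult_le_pos; lra).
        assert (E : (1 + j^2)^2 * D = (1+j^2)*D + j^2 * D + j^2 * (j^2 * D)) by ring.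
        rewrite E. lra. }
      apply (Rmult_lt_compat_l (1+j^2)) in Hd; auto.
      replace ((1 + j^2) * (eps / (1 + j^2))) with eps in Hd by (field; lra).
      exact Hd.
Qed.
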